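(* Let $\mathcal{U}$ and $\mathcal{A}$ be separable Banach spaces with duals $\mathcal{U}^*,\mathcal{A}^*$ and pairings $[\cdot,\cdot]_{\mathcal{U}},[\cdot,\cdot]_{\mathcal{A}}$, with quadratic norms $\|u\|_{\mathcal{U}}^2=[\mathcal{K}^{-1}u,u]_{\mathcal{U}}$, $\|a\|_{\mathcal{A}}^2=[\mathcal{S}^{-1}a,a]_{\mathcal{A}}$ given by invertible symmetric positive linear maps $\mathcal{K}:\mathcal{U}^*\to\mathcal{U}$, $\mathcal{S}:\mathcal{A}^*\to\mathcal{A}$. Let $\Omega\subseteq\mathbb{R}^d$ be bounded and consider the parametric PDE $\mathcal{P}(u;a)(\mathbf{x})=f(\mathbf{x})$ on $\Omega$, $\mathcal{B}(u;a)(\mathbf{x})=g(\mathbf{x})$ on $\partial\Omega$, where (Assumption) there exist bounded linear $L_1,\dots,L_Q\in\mathcal{L}(\mathcal{U};C(\Omega))$ with $L_1,\dots,L_{Q_b}\in\mathcal{L}(\mathcal{U};C(\partial\Omega))$ ($1\le Q_b\le Q$), bounded linear $\widetilde{L}_1,\dots,\widetilde{L}_J\in\mathcal{L}(\mathcal{A};C(\overline{\Omega}))$, and maps $P:\mathbb{R}^{Q+J}\to\mathbb{R}$, $B:\mathbb{R}^{Q_b+J}\to\mathbb{R}$ with $\mathcal{P}(u;a)(\mathbf{x})=P(L_1(u)(\mathbf{x}),\dots,L_Q(u)(\mathbf{x});\widetilde{L}_1(a)(\mathbf{x}),\dots,\widetilde{L}_J(a)(\mathbf{x}))$ on $\Omega$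 and $\mathcal{B}(u;a)(\mathbf{x})=B(L_1(u)(\mathbf{x}),\dots,L_{Q_b}(u)(\mathbf{x});\widetilde{L}_1(a)(\mathbf{x}),\dots,\widetilde{L}_J(a)(\mathbf{x}))$ on $\partial\Omega$. Let $\psi_1,\dots,\psi_I\in\mathcal{U}^*$, $\boldsymbol{\psi}=(\psi_1,\dots,\psi_I)$, $\mathbf{o}\in\mathbb{R}^I$, $\gamma\ne0$. With the objects in the context, assume $\Theta$ and $\widetilde{\Theta}$ are invertible. Then $(u^\dagger,a^\dagger)\in\mathcal{U}\times\mathcal{A}$ is a minimizer of $$\min_{(u,a)\in\mathcal{U}\times\mathcal{A}}\ \|u\|_{\mathcal{U}}^2+\|a\|_{\mathcal{A}}^2+\frac{1}{\gamma^2}|[\boldsymbol{\psi},u]-\mathbf{o}|^2\ \text{ s.t. }\ \mathcal{P}(u;a)(\mathbf{x}_m)=f(\mathbf{x}_m),\ 1\le m\le M_\Omega;\ \mathcal{B}(u;a)(\mathbf{x}_m)=g(\mathbf{x}_m),\ M_\Omega<m\le M$$ if and only if $u^\dagger=\sum_{n=1}^{I+N}z^\dagger_n\chi_n$ and $a^\dagger=\sum_{n=1}^{\widetilde{N}}\widetilde{z}^\dagger_n\widetilde{\chi}_n$, where $(\mathbf{z}^\dagger,\widetilde{\mathbf{z}}^\dagger)$ is a minimizer of $$\min_{(\mathbf{z},\widetilde{\mathbf{z}})\in\mathbb{R}^{I+N}\times\mathbb{R}^{\widetilde{N}}}\ \mathbf{z}^T\Theta^{-1}\mathbf{z}+\widetilde{\mathbf{z}}^T\widetilde{\Theta}^{-1}\widetilde{\mathbf{z}}+\frac{1}{\gamma^2}|\Pi^I\mathbf{z}-\mathbf{o}|^2\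 \text{ s.t. }\ F(\Pi_N\mathbf{z};\widetilde{\mathbf{z}})=\mathbf{y}.$$
   Context: Collocation points $\mathbf{x}_1,\dots,\mathbf{x}_{M_\Omega}\in\Omega$, $\mathbf{x}_{M_\Omega+1},\dots,\mathbf{x}_M\in\partial\Omega$. $\phi^{(q)}_m=\delta_{\mathbf{x}_m}\circ L_q\in\mathcal{U}^*$ for $1\le m\le M$ if $q\le Q_b$, for $1\le m\le M_\Omega$ if $q>Q_b$; $\boldsymbol{\phi}=(\boldsymbol{\phi}^{(1)},\dots,\boldsymbol{\phi}^{(Q)})$ with $N=MQ_b+M_\Omega(Q-Q_b)$ entries. $\widetilde{\phi}^{(j)}_m=\delta_{\mathbf{x}_m}\circ\widetilde{L}_j\in\mathcal{A}^*$ for $m=1,\dots,M$, $j=1,\dots,J$; $\widetilde{\boldsymbol{\phi}}=(\widetilde{\boldsymbol{\phi}}^{(1)},\dots,\widetilde{\boldsymbol{\phi}}^{(J)})$ with $\widetilde{N}=MJ$ entries. $\boldsymbol{\varphi}=(\varphi_1,\dots,\varphi_{I+N})$ with $\varphi_n=\psi_n$ for $n\le I$ and $\varphi_n=\phi_{n-I}$ for $n>I$ (the $\phi_k$ being the entries of $\boldsymbol{\phi}$). $\Theta_{i,n}=[\varphi_i,\mathcal{K}\varphi_n]_{\mathcal{U}}$, $\widetilde{\Theta}_{i,n}=[\widetilde{\phi}_i,\mathcal{S}\widetilde{\phi}_n]_{\mathcal{A}}$; $\chi_i=\sum_{n=1}^{N+I}(\Theta^{-1})_{i,n}\mathcal{K}\varphi_n$,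 $\widetilde{\chi}_i=\sum_{n=1}^{\widetilde{N}}(\widetilde{\Theta}^{-1})_{i,n}\mathcal{S}\widetilde{\phi}_n$. $y_m=f(\mathbf{x}_m)$ for $m\le M_\Omega$, $g(\mathbf{x}_m)$ otherwise. $F$ is defined by $(F([\boldsymbol{\phi},u]_{\mathcal{U}};[\widetilde{\boldsymbol{\phi}},a]_{\mathcal{A}}))_m=P([\phi^{(1)}_m,u]_{\mathcal{U}},\dots,[\phi^{(Q)}_m,u]_{\mathcal{U}};[\widetilde{\phi}^{(1)}_m,a]_{\mathcal{A}},\dots,[\widetilde{\phi}^{(J)}_m,a]_{\mathcal{A}})$ for $m\le M_\Omega$ and $B([\phi^{(1)}_m,u]_{\mathcal{U}},\dots,[\phi^{(Q_b)}_m,u]_{\mathcal{U}};[\widetilde{\phi}^{(1)}_m,a]_{\mathcal{A}},\dots,[\widetilde{\phi}^{(J)}_m,a]_{\mathcal{A}})$ for $m>M_\Omega$ (so $F$ is a map on vectors in $\mathbb{R}^N\times\mathbb{R}^{\widetilde{N}}$). $\Pi^I:\mathbb{R}^{I+N}\to\mathbb{R}^I$ extracts the first $I$ entries, $\Pi_N:\mathbb{R}^{I+N}\to\mathbb{R}^N$ the last $N$ entries. *)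

(* Defs.v *)
From HB Require Import structures.
From mathcomp Require Import all_boot all_order all_algebra.
From mathcomp Require Import all_classical all_reals all_analysis.
Set Implicit Arguments. Unset Strict Implicit. Unset Printing Implicit Defensive.
Import Order.TTheory GRing.Theory Num.Theory.
Import numFieldNormedType.Exports.
Local Open Scope classical_set_scope.
Local Open Scope ring_scope.

Definition boundary (T : topologicalType) (A : set T) : set T :=
  closure A `\` interior A.

Definition separable (T : topologicalType) : Prop :=
  exists D : set T, countable D /\ closure D = setT.

(* (Us, ev) is (a copy of) the topological dual of the normed space U:
   ev is a bilinear pairing [.,.], every ev phi is a continuous linear
   functional, ev is injective, and every continuous linear functional
   arises this way. *)
Definition is_dual_pairing (R : realType) (U : normedModType R) (Us : lmodType R)
    (ev : Us -> U -> R) : Prop :=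
  [/\ (forall phi (c : R) u v, ev phi (c *: u + v) = c * ev phi u + ev phi v),
      (forall (c : R) phi psi u, ev (c *: phi + psi) u = c * ev phi u + ev psi u),
      (forall phi, continuous (ev phi)),
      injective ev &
      (forall l : U -> R, (forall (c : R) u v, l (c *: u + v) = c * l u + l v) ->
          continuous l -> exists phi, ev phi = l)].

Definition is_quadratic_norm_op (R : realType) (U : normedModType R) (Us : lmodType R)
    (ev : Us -> U -> R) (K : Us -> U) (Kinv : U -> Us) : Prop :=
  (forall (c : R) phi psi, K (c *: phi + psi) = c *: K phi + K psi) /\
  cancel K Kinv /\ cancel Kinv K /\
  (forall phi psi, ev phi (K psi) = ev psi (K phi)) /\
  (forall phi, phi != 0 -> 0 < ev phi (K phi)) /\
  (forall u, `|u| ^+ 2 = ev (Kinv u) u).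

(* L is a bounded linear operator from U into C(D) (continuous functions on D,
   sup-norm): linear, each L u continuous on D, and sup_D |L u| <= C |u|. *)
Definition bounded_linear_into_C (R : realType) (d : nat) (U : normedModType R)
    (D : set 'rV[R]_d) (L : U -> 'rV[R]_d -> R) : Prop :=
  [/\ (forall (c : R) u v x, L (c *: u + v) x = c * L u x + L v x),
      (forall u, {within D, continuous (L u)}) &
      (exists C : R, forall u x, D x -> `|L u x| <= C * `|u|)].

Definition is_minimizer (T : Type) (R : realType) (C : T -> Prop) (obj : T -> R)
    (t : T) : Prop :=
  C t /\ forall t', C t' -> obj t <= obj t'.

(* number of collocation functionals attached to operator q *)
Definition cnt (Q Qb M MO : nat) (q : 'I_Q) : nat := if (q < Qb)%N then M else MO.

(* the ordered list phi = (phi^(1), ..., phi^(Q)), phi^(q) = (phi^(q)_m)_m *)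
Definition phi_seq (V : Type) (Q Qb M MO : nat) (phi : 'I_Q -> 'I_M -> V) : seq V :=
  flatten [seq [seq phi q m | m <- take (cnt Qb M MO q) (enum 'I_M)] | q <- enum 'I_Q].

(* the ordered list phit = (phit^(1), ..., phit^(J)), phit^(j) = (phit^(j)_m)_(m=1..M) *)
Definition phit_seq (V : Type) (J M : nat) (phit : 'I_J -> 'I_M -> V) : seq V :=
  flatten [seq [seq phit j m | m <- enum 'I_M] | j <- enum 'I_J].

(* position (0-based) of phi^(q)_m in that list *)
Definition pos (Q Qb M MO : nat) (q : 'I_Q) (m : nat) : nat :=
  (\sum_(q' < Q | (q' < q)%N) cnt Qb M MO q' + m)%N.

(* nat-indexed entry of a column vector (0 outside the range) *)
Definition vnth (R : realType) (n : nat) (w : 'cV[R]_n) (k : nat) : R :=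
  if insub k is Some i then w i 0 else 0.

Definition Fmap (R : realType) (Q Qb J M MO N : nat) (Hb : (Qb <= Q)%N)
    (P : ('I_Q -> R) -> ('I_J -> R) -> R) (B : ('I_Qb -> R) -> ('I_J -> R) -> R)
    (w : 'cV[R]_N) (wt : 'cV[R]_(J * M)) : 'cV[R]_M :=
  \col_(m < M)
    if (m < MO)%N then
      P (fun q => vnth w (pos Qb M MO q m)) (fun j => vnth wt (j * M + m)%N)
    else
      B (fun q => vnth w (pos Qb M MO (widen_ord Hb q) m)) (fun j => vnth wt (j * M + m)%N).

(* Main.v *)
Require Import Defs.
From HB Require Import structures.
From mathcomp Require Import all_boot all_order all_algebra.
From mathcomp Require Import all_classical all_reals all_analysis.
Import Order.TTheory GRing.Theory Num.Theory.
Import numFieldNormedType.Exports.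
From mathcomp Require Import ring lra.
Local Open Scope classical_set_scope.
Local Open Scope ring_scope.

Definition Gram (R : realType) (V : normedModType R) (Vs : lmodType R)
  (ev : Vs -> V -> R) (K : Vs -> V) n (vp : 'I_n -> Vs) : 'M[R]_n :=
  \matrix_(i, j) ev (vp i) (K (vp j)).
Definition coefv (R : realType) (V : normedModType R) (Vs : lmodType R)
  (ev : Vs -> V -> R) n (vp : 'I_n -> Vs) (u : V) : 'cV[R]_n :=
  \col_i ev (vp i) u.
Arguments Gram {R V Vs} ev K {n} vp.
Arguments coefv {R V Vs} ev {n} vp u.
Definition recon (R : realType) (V : normedModType R) (Vs : lmodType R)
  (ev : Vs -> V -> R) (K : Vs -> V) n (vp : 'I_n -> Vs) (z : 'cV[R]_n) : V :=
  \sum_i z i 0 *: (\sum_j (invmx (Gram ev K vp)) i j *: K (vp j)).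
Arguments recon {R V Vs} ev K {n} vp z.

Lemma gen_facts (R : realType) (V : normedModType R) (Vs : lmodType R)
  (ev : Vs -> V -> R) (K : Vs -> V) (Kinv : V -> Vs)
  (evl : forall phi (c : R) u v, ev phi (c *: u + v) = c * ev phi u + ev phi v)
  (evr : forall (c : R) phi psi u, ev (c *: phi + psi) u = c * ev phi u + ev psi u)
  (hK : is_quadratic_norm_op ev K Kinv) n (vp : 'I_n -> Vs) :
  Gram ev K vp \in unitmx ->
  (forall z, coefv ev vp (recon ev K vp z) = z) /\
  (forall z, `|recon ev K vp z| ^+ 2 = (z^T *m invmx (Gram ev K vp) *m z) 0 0) /\
  (forall u, `|u| ^+ 2 = `|recon ev K vp (coefv ev vp u)| ^+ 2
                       + `|u - recon ev K vp (coefv ev vp u)| ^+ 2).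
Proof.
move=> Gu.
case: hK => Klin [KK [KiK [Ksym [Kpos Knorm]]]].
have ev0 phi : ev phi 0 = 0.
  have := evl phi 1 0 0; rewrite scale1r addr0 mul1r => /eqP.
  by rewrite -subr_eq subrr eq_sym => /eqP.
have evD phi u v : ev phi (u + v) = ev phi u + ev phi v.
  by have := evl phi 1 u v; rewrite scale1r mul1r.
have evZ phi c u : ev phi (c *: u) = c * ev phi u.
  by have := evl phi c u 0; rewrite addr0 ev0 addr0.
have ev0l u : ev 0 u = 0.
  have := evr 1 0 0 u; rewrite scale1r addr0 mul1r => /eqP.
  by rewrite -subr_eq subrr eq_sym => /eqP.
have evDl phi psi u : ev (phi + psi) u = ev phi u + ev psi u.
  by have := evr 1 phi psi u; rewrite scale1r mul1r.
have evZl c phi u : ev (c *: phi) u = c * ev phi u.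
  by have := evr c phi 0 u; rewrite addr0 ev0l addr0.
have evS phi (F : 'I_n -> V) : ev phi (\sum_j F j) = \sum_j ev phi (F j).
  by rewrite (big_morph (ev phi) (evD phi) (ev0 phi)).
have evSl u (F : 'I_n -> Vs) : ev (\sum_j F j) u = \sum_j ev (F j) u.
  by rewrite (big_morph (fun p => ev p u) (fun p q => evDl p q u) (ev0l u)).
have K0 : K 0 = 0.
  have := Klin 1 0 0; rewrite !scale1r addr0 => /eqP.
  by rewrite -subr_eq subrr eq_sym => /eqP.
have KD p q : K (p + q) = K p + K q by have := Klin 1 p q; rewrite !scale1r.
have KZ c p : K (c *: p) = c *: K p by have := Klin c p 0; rewrite addr0 K0 addr0.
have KS (F : 'I_n -> Vs) : K (\sum_j F j) = \sum_j K (F j).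
  by rewrite (big_morph K KD K0).
set G := Gram ev K vp.
have Gsym : G^T = G by apply/matrixP => i j; rewrite !mxE Ksym.
have GiT : (invmx G)^T = invmx G by rewrite trmx_inv Gsym.
have coefK (w : 'cV[R]_n) : coefv ev vp (\sum_j w j 0 *: K (vp j)) = G *m w.
  apply/matrixP => i k; rewrite !mxE evS; apply: eq_bigr => j _.
  by rewrite evZ ord1 !mxE mulrC.
have normK (w : 'cV[R]_n) : `|\sum_j w j 0 *: K (vp j)| ^+ 2 = (w^T *m G *m w) 0 0.
  have -> : \sum_j w j 0 *: K (vp j) = K (\sum_j w j 0 *: vp j).
    by rewrite KS; apply: eq_bigr => j _; rewrite KZ.
  rewrite Knorm KK -mulmxA mxE evSl; apply: eq_bigr => j _.
  rewrite evZl mxE; congr (_ * _).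
  have := congr1 (fun M : 'cV[R]_n => M j 0) (coefK w).
  rewrite mxE => <-; rewrite KS; congr (ev _ _); apply: eq_bigr => k _.
  by rewrite KZ.
have GiS i j : invmx G i j = invmx G j i by rewrite -[in LHS]GiT mxE.
have reconE (z : 'cV[R]_n) : recon ev K vp z = \sum_j (invmx G *m z) j 0 *: K (vp j).
  rewrite /recon; under eq_bigr do rewrite scaler_sumr.
  rewrite exchange_big; apply: eq_bigr => j _ /=.
  rewrite [in RHS]mxE scaler_suml; apply: eq_bigr => i _.
  by rewrite scalerA GiS mulrC.
have coefR (z : 'cV[R]_n) : coefv ev vp (recon ev K vp z) = z.
  by rewrite reconE coefK mulmxA mulmxV // mul1mx.
split => //; split.
  move=> z; rewrite reconE normK trmx_mul GiT.
  by rewrite -!mulmxA (mulmxA G (invmx G)) mulmxV // mul1mx.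
move=> u.
set p := recon ev K vp _; set r := u - p.
have cr : coefv ev vp r = 0.
  apply/matrixP => i k.
  have := congr1 (fun M : 'cV[R]_n => M i k) (coefR (coefv ev vp u)).
  rewrite !mxE /r -/p => Hp.
  by rewrite -scaleN1r evD evZ Hp mulN1r subrr.
have r0 j : ev (vp j) r = 0.
  by have := congr1 (fun M : 'cV[R]_n => M j 0) cr; rewrite !mxE.
set w := invmx G *m coefv ev vp u.
set s := \sum_j w j 0 *: vp j.
have ps : p = K s by rewrite /p reconE KS; apply: eq_bigr => j _; rewrite KZ.
have sr : ev s r = 0.
  rewrite evSl big1 // => j _; by rewrite evZl r0 mulr0.
have ur : u = p + r by rewrite /r addrC subrK.
have Kiu : Kinv u = s + Kinv r.
  by rewrite ur ps -{1}(KiK r) -KD KK.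
clearbody r p.
rewrite [in LHS]Knorm Kiu {1}ur evDl !evD sr addr0.
rewrite ps [ev (Kinv r) _]Ksym KiK sr add0r.
by rewrite !Knorm KK.
Qed.

Arguments gen_facts {R V Vs ev K Kinv} evl evr hK {n vp}.

Lemma nth_flat (T : Type) (x0 : T) (s : seq (seq T)) i m :
  (i < size s)%N -> (m < size (nth [::] s i))%N ->
  nth x0 (flatten s) (sumn (take i (shape s)) + m) = nth x0 (nth [::] s i) m.
Proof.
elim: s i => [|a s IH] i //=.
case: i => [|i] /= hi hm.
  by rewrite add0n nth_cat hm.
rewrite nth_cat -addnA ltnNge leq_addr /= addKn.
by apply: IH.
Qed.

Lemma flat_gen (T : Type) (x0 : T) Q (G : 'I_Q -> seq T) (c : nat -> nat)
  (hc : forall q : 'I_Q, size (G q) = c q) (q : 'I_Q) m :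
  (m < c q)%N ->
  let s := flatten [seq G q | q <- enum 'I_Q] in
  (\sum_(0 <= k < q) c k + m < \sum_(0 <= k < Q) c k)%N /\
  nth x0 s (\sum_(0 <= k < q) c k + m) = nth x0 (G q) m.
Proof.
move=> hm s.
have shE : shape [seq G q | q <- enum 'I_Q] = map c (iota 0 Q).
  by rewrite /shape -map_comp -val_enum_ord -map_comp; apply: eq_map => i /=; rewrite hc.
have sumE k : (k <= Q)%N -> sumn (take k (shape [seq G q | q <- enum 'I_Q])) = (\sum_(0 <= i < k) c i)%N.
  move=> hk; rewrite shE -map_take take_iota (minn_idPl hk) sumnE big_map.
  by rewrite /index_iota subn0.
have hq : (q <= Q)%N by apply: ltnW.
have hsz : size (nth [::] [seq G q | q <- enum 'I_Q] q) = c q.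
  by rewrite (nth_map q) ?size_enum_ord // nth_ord_enum hc.
split.
  rewrite (@big_cat_nat _ _ _ q 0 Q _ _ (leq0n q) hq) /= ltn_add2l big_ltn //.
  exact: ltn_addr.
rewrite -(sumE _ hq) nth_flat ?size_map ?size_enum_ord ?hsz //.
  by rewrite (nth_map q) ?size_enum_ord // nth_ord_enum.
by rewrite -enumT size_enum_ord.
Qed.

Lemma phi_pos (V : Type) (x0 : V) Q Qb M MO (hQb : (Qb <= Q)%N) (hMO : (MO <= M)%N)
  (phi : 'I_Q -> 'I_M -> V) (q : 'I_Q) (m : 'I_M) :
  (m < cnt Qb M MO q)%N ->
  (pos Qb M MO q m < M * Qb + MO * (Q - Qb))%N /\
  nth x0 (phi_seq Qb MO phi) (pos Qb M MO q m) = phi q m.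
Proof.
move=> hm.
pose c k := if (k < Qb)%N then M else MO.
have hc (q' : 'I_Q) : size [seq phi q' m | m <- take (cnt Qb M MO q') (enum 'I_M)] = c q'.
  rewrite size_map size_take size_enum_ord /c /cnt.
  case: (q' < Qb)%N; first by rewrite ltnn.
  by case: ltnP => // h; apply/eqP; rewrite eqn_leq h hMO.
have posE : pos Qb M MO q m = (\sum_(0 <= k < q) c k + m)%N.
  rewrite /pos; congr (_ + _)%N.
  rewrite (big_nat_widen _ _ _ _ _ (ltnW (ltn_ord q))) big_mkord.
  by apply: eq_bigr.
have := @flat_gen _ x0 _ _ _ hc q m hm.
rewrite -posE => -[h1 h2]; split; last first.
  rewrite /phi_seq h2 (nth_map m); last by rewrite size_take size_enum_ord; case: ifP.
  by rewrite nth_take ?nth_ord_enum.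
apply: (leq_trans h1) => {h1 h2}.
rewrite (@big_cat_nat _ _ _ Qb 0 Q _ _ (leq0n Qb) hQb) /=.
rewrite (@eq_big_nat _ _ _ 0 Qb _ (fun _ => M)); last by move=> i /andP[_ h]; rewrite /c h.
rewrite (@eq_big_nat _ _ _ Qb Q _ (fun _ => MO)); last first.
  by move=> i /andP[h _]; rewrite /c ltnNge h.
by rewrite !sum_nat_const_nat subn0 mulnC [(MO * _)%N]mulnC.
Qed.

Lemma phit_pos (V : Type) (x0 : V) J M (phit : 'I_J -> 'I_M -> V) (j : 'I_J) (m : 'I_M) :
  (j * M + m < J * M)%N /\ nth x0 (phit_seq phit) (j * M + m) = phit j m.
Proof.
have hc (j' : 'I_J) : size [seq phit j' m | m <- enum 'I_M] = (fun _ => M) j'.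
  by rewrite size_map size_enum_ord.
have := @flat_gen _ x0 _ _ _ hc j m (ltn_ord m).
rewrite !sum_nat_const_nat !subn0 => -[h1 h2]; split => //.
by rewrite /phit_seq h2 (nth_map m) ?size_enum_ord // nth_ord_enum.
Qed.

Lemma split_l m n (i : 'I_m) : fintype.split (lshift n i) = inl i.
Proof. exact: (unsplitK (inl i)). Qed.
Lemma split_r m n (i : 'I_n) : fintype.split (rshift m i) = inr i.
Proof. exact: (unsplitK (inr i)). Qed.

Theorem corollary4p4
  (R : realType)
  (* the spaces U, A, their duals and pairings, and the operators K, S *)
  (U A : completeNormedModType R) (Us As : lmodType R)
  (evU : Us -> U -> R) (evA : As -> A -> R)
  (K : Us -> U) (Kinv : U -> Us) (S : As -> A) (Sinv : A -> As)
  (hsepU : separable U) (hsepA : separable A)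
  (hdU : is_dual_pairing evU) (hdA : is_dual_pairing evA)
  (hK : is_quadratic_norm_op evU K Kinv) (hS : is_quadratic_norm_op evA S Sinv)
  (* the domain and the PDE *)
  (d : nat) (Omega : set 'rV[R]_d) (hOmega : bounded_set Omega)
  (Q Qb J : nat) (hQb1 : (1 <= Qb)%N) (hQb : (Qb <= Q)%N)
  (L : 'I_Q -> U -> 'rV[R]_d -> R) (Lt : 'I_J -> A -> 'rV[R]_d -> R)
  (hL : forall q, bounded_linear_into_C Omega (L q))
  (hLb : forall q : 'I_Qb, bounded_linear_into_C (boundary Omega) (L (widen_ord hQb q)))
  (hLt : forall j, bounded_linear_into_C (closure Omega) (Lt j))
  (P : ('I_Q -> R) -> ('I_J -> R) -> R) (B : ('I_Qb -> R) -> ('I_J -> R) -> R)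
  (f g : 'rV[R]_d -> R)
  (* data *)
  (I : nat) (psi : 'I_I -> Us) (o : 'cV[R]_I) (gamma : R) (hgamma : gamma != 0)
  (* collocation points *)
  (M MO : nat) (hMO : (MO <= M)%N) (x : 'I_M -> 'rV[R]_d)
  (hxin : forall m : 'I_M, (m < MO)%N -> Omega (x m))
  (hxbd : forall m : 'I_M, (MO <= m)%N -> boundary Omega (x m))
  (* the functionals phi^(q)_m = delta_{x_m} o L_q and phit^(j)_m = delta_{x_m} o Lt_j *)
  (phi : 'I_Q -> 'I_M -> Us) (phit : 'I_J -> 'I_M -> As)
  (hphi : forall (q : 'I_Q) (m : 'I_M), ((q < Qb)%N || (m < MO)%N) ->
            evU (phi q m) = fun u => L q u (x m))
  (hphit : forall j m, evA (phit j m) = fun a => Lt j a (x m)) :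
  let N := (M * Qb + MO * (Q - Qb))%N in
  let Nt := (J * M)%N in
  let phiv : 'I_N -> Us := fun k => nth 0 (phi_seq Qb MO phi) k in
  let phitv : 'I_Nt -> As := fun k => nth 0 (phit_seq phit) k in
  let varphi : 'I_(I + N) -> Us :=
    fun n => match fintype.split n with inl i => psi i | inr k => phiv k end in
  let Theta : 'M[R]_(I + N) := \matrix_(i, n) evU (varphi i) (K (varphi n)) in
  let Thetat : 'M[R]_Nt := \matrix_(i, n) evA (phitv i) (S (phitv n)) in
  let chi : 'I_(I + N) -> U := fun i => \sum_n (invmx Theta) i n *: K (varphi n) in
  let chit : 'I_Nt -> A := fun i => \sum_n (invmx Thetat) i n *: S (phitv n) in
  let y : 'cV[R]_M := \col_m (if (m < MO)%N then f (x m) else g (x m)) in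
  (* the infinite-dimensional problem *)
  let Cinf (ua : U * A) : Prop :=
    forall m : 'I_M,
      ((m < MO)%N -> P (fun q => L q ua.1 (x m)) (fun j => Lt j ua.2 (x m)) = f (x m)) /\
      ((MO <= m)%N ->
         B (fun q => L (widen_ord hQb q) ua.1 (x m)) (fun j => Lt j ua.2 (x m)) = g (x m)) in
  let objinf (ua : U * A) : R :=
    `|ua.1| ^+ 2 + `|ua.2| ^+ 2 + gamma^-2 * \sum_(i < I) (evU (psi i) ua.1 - o i 0) ^+ 2 in
  (* the finite-dimensional problem *)
  let Cfin (zz : 'cV[R]_(I + N) * 'cV[R]_Nt) : Prop :=
    Fmap MO hQb P B (dsubmx zz.1) zz.2 = y in
  let objfin (zz : 'cV[R]_(I + N) * 'cV[R]_Nt) : R :=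
    (zz.1^T *m invmx Theta *m zz.1) 0 0 + (zz.2^T *m invmx Thetat *m zz.2) 0 0
    + gamma^-2 * \sum_(i < I) (usubmx zz.1 i 0 - o i 0) ^+ 2 in
  Theta \in unitmx -> Thetat \in unitmx ->
  forall (udag : U) (adag : A),
    is_minimizer Cinf objinf (udag, adag) <->
    exists (zdag : 'cV[R]_(I + N)) (ztdag : 'cV[R]_Nt),
      is_minimizer Cfin objfin (zdag, ztdag) /\
      udag = \sum_n zdag n 0 *: chi n /\ adag = \sum_n ztdag n 0 *: chit n.
Proof.
move=> N Nt phiv phitv varphi Theta Thetat chi chit y Cinf objinf Cfin objfin HT HTt udag adag.
case: hdU => evlU evrU _ _ _.
case: hdA => evlA evrA _ _ _.
have HT' : Gram evU K varphi \in unitmx := HT.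
have HTt' : Gram evA S phitv \in unitmx := HTt.
have [cU [nU pU]] := gen_facts evlU evrU hK HT'.
have [cA [nA pA]] := gen_facts evlA evrA hS HTt'.
set rU := recon evU K varphi.
set rA := recon evA S phitv.
set kU := coefv evU varphi.
set kA := coefv evA phitv.
have chiE (z : 'cV[R]_(I + N)) : \sum_n z n 0 *: chi n = rU z by [].
have chitE (z : 'cV[R]_Nt) : \sum_n z n 0 *: chit n = rA z by [].
have cU' (z : 'cV[R]_(I + N)) : kU (rU z) = z := cU z.
have cA' (z : 'cV[R]_Nt) : kA (rA z) = z := cA z.
have pU' u : `|u| ^+ 2 = `|rU (kU u)| ^+ 2 + `|u - rU (kU u)| ^+ 2 := pU u.
have pA' a : `|a| ^+ 2 = `|rA (kA a)| ^+ 2 + `|a - rA (kA a)| ^+ 2 := pA a.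
have nU' (z : 'cV[R]_(I + N)) : `|rU z| ^+ 2 = (z^T *m invmx Theta *m z) 0 0 := nU z.
have nA' (z : 'cV[R]_Nt) : `|rA z| ^+ 2 = (z^T *m invmx Thetat *m z) 0 0 := nA z.
have V1 u (q : 'I_Q) (m : 'I_M) : ((q < Qb)%N || (m < MO)%N) ->
    vnth (dsubmx (kU u)) (pos Qb M MO q m) = L q u (x m).
  move=> H.
  have hc : (m < cnt Qb M MO q)%N.
    rewrite /cnt; case: ifP => hq; first exact: ltn_ord.
    by move: H; rewrite hq.
  have [hlt heq] := @phi_pos _ 0 _ _ _ _ hQb hMO phi q m hc.
  rewrite /vnth; case: insubP => [k _ hk|]; last by move=> /negP [].
  by rewrite !mxE /varphi split_r /phiv hk heq hphi.
have V2 a (j : 'I_J) (m : 'I_M) : vnth (kA a) (j * M + m) = Lt j a (x m).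
  have [hlt heq] := @phit_pos _ 0 _ _ phit j m.
  rewrite /vnth; case: insubP => [k _ hk|]; last by move=> /negP [].
  by rewrite !mxE /phitv hk heq hphit.
have Feas u a : Cinf (u, a) <-> Cfin (kU u, kA a).
  rewrite /Cinf /Cfin /=.
  have -> : Fmap MO hQb P B (dsubmx (kU u)) (kA a) = \col_(m < M)
      (if (m < MO)%N then P (fun q => L q u (x m)) (fun j => Lt j a (x m))
       else B (fun q => L (widen_ord hQb q) u (x m)) (fun j => Lt j a (x m))).
    apply/matrixP => m k; rewrite !mxE; case: ifP => hm.
      by congr P; apply: funext => q; [apply: V1; rewrite hm orbT | apply: V2].
    by congr B; apply: funext => q; [apply: V1; rewrite /= (ltn_ord q) | apply: V2].
  split.
    move=> H; apply/matrixP => m k; rewrite !mxE; case: ifP => hm.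
      exact: (H m).1 hm.
    by apply: (H m).2; rewrite leqNgt hm.
  move=> H m; have := congr1 (fun M0 : 'cV[R]_M => M0 m 0) H; rewrite !mxE /=.
  split => hm.
    by rewrite hm in H0 *.
  by move: H0; rewrite ltnNge hm.
have us u (i : 'I_I) : usubmx (kU u) i 0 = evU (psi i) u.
  by rewrite !mxE /varphi split_l.
have Obj u a : objinf (u, a) = objfin (kU u, kA a)
    + `|u - rU (kU u)| ^+ 2 + `|a - rA (kA a)| ^+ 2.
  rewrite /objinf /objfin /= (pU' u) (pA' a) nU' nA'.
  have -> : \sum_(i < I) (usubmx (kU u) i 0 - o i 0) ^+ 2
          = \sum_(i < I) (evU (psi i) u - o i 0) ^+ 2.
    by apply: eq_bigr => i _; rewrite us.
  lra.
have ObjR (z : 'cV[R]_(I + N)) (zt : 'cV[R]_Nt) : objinf (rU z, rA zt) = objfin (z, zt).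
  by rewrite Obj cU' cA' !subrr !normr0 expr0n /= !addr0.
have sq0 (V : normedModType R) (v : V) : `|v| ^+ 2 <= 0 -> v = 0.
  move=> h; apply/eqP; rewrite -normr_eq0 -sqrf_eq0.
  by rewrite eq_le h sqr_ge0.
split.
  move=> [Cu Hmin]; exists (kU udag), (kA adag).
  have Cp : Cinf (rU (kU udag), rA (kA adag)) by apply/Feas; rewrite cU' cA'; apply/Feas.
  have := Hmin _ Cp; rewrite ObjR Obj => Hle.
  have h1 := sqr_ge0 `|udag - rU (kU udag)|.
  have h2 := sqr_ge0 `|adag - rA (kA adag)|.
  split; last split.
  - split; first by apply/Feas.
    move=> [z' zt'] Cz'.
    have C' : Cinf (rU z', rA zt') by apply/Feas; rewrite cU' cA'.
    have := Hmin _ C'; rewrite ObjR Obj /=; lra.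
  - rewrite chiE; apply/eqP; rewrite -subr_eq0; apply/eqP; apply: sq0; lra.
  - rewrite chitE; apply/eqP; rewrite -subr_eq0; apply/eqP; apply: sq0; lra.
move=> [z [zt [[Cz Hmin] [-> ->]]]]; rewrite chiE chitE; split.
  by apply/Feas; rewrite cU' cA'.
move=> [u' a'] Cu'; rewrite ObjR Obj.
have := Hmin _ ((Feas _ _).1 Cu').
have h1 := sqr_ge0 `|u' - rU (kU u')|.
have h2 := sqr_ge0 `|a' - rA (kA a')|.
rewrite /=; lra.
Qed.
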